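(* In the setting described in the context, let $X,Y$ be graphs in $\Gamma$. Every morphism $h:GX\to GY$ of $R\mathcal{C}$ can be uniquely represented as right multiplication by an element $a\in A$ (i.e. $(x)h=xa$ for $x\in GX\subseteq M$), and $a$ is of the form $a=\sum_{i\in I}\sigma_ik_i$ where $I$ is finite, the $k_i$ are nonzero elements of $R$, and the $\sigma_i:X\to Y$ are distinct morphisms of $\Gamma$.
   Context: $R$ is a commutative ring with $1\ne0$; $\kappa$ a cardinal of uncountable cofinality. Graphs: sets with a binary relation; morphisms: relation-preserving maps; maps act on the right ($\sigma\tau$ = first $\sigma$ then $\tau$). $R\mathcal{C}$ is a category such that: it is an $R$-category (Hom-sets, written $\mathrm{Hom}_R$, are $R$-modules, composition bilinear); preabelian; has arbitrary direct sums; is concrete with underlying-set functor preserving directed colimits and monomorphisms injective on underlying sets. $\Gamma$ is a full subcategory of graphs with one representative per isomorphism class of graphs of cardinality $<\kappa$. $A$ is the free $R$-module on the morphisms of $\Gamma$ plus $1$, an $R$-algebra via composition (product $0$ if not composable), $R$ central. $M\in R\mathcal{C}$ satisfies: (B1) $A\cong\mathrm{Hom}_R(M,M)$ (so $M$ is a right $A$-object); (B2) $A\subseteq M$ as $A$-objects and $A\varphi=A\cap M\varphi$ for every morphism $\varphi$ of $\Gamma$; (B3) for a monomorphism $\varphi:C\to D$ in $\Gamma$, $M\,\mathrm{id}_C\subseteq M\xrightarrow{\varphi}M$ is a monomorphism. For $X\in\Gamma$, $GX=M\,\mathrm{id}_X$, a direct summand of $M$ since $\mathrm{id}_X$ is an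 idempotent of $A$. *)

(* Defs.v *)
From HB Require Import structures.
From mathcomp Require Import all_boot all_algebra.
From Stdlib Require List Permutation.

Set Implicit Arguments.
Unset Strict Implicit.
Unset Printing Implicit Defensive.
Import GRing.Theory.
Local Open Scope ring_scope.

(* [comp f g] means "first f, then g".                                *)
Record rcat (R : comNzRingType) := RCat {
  obj : Type;
  arr : obj -> obj -> lmodType R;
  idm : forall X, arr X X;
  comp : forall X Y Z, arr X Y -> arr Y Z -> arr X Z
}.
Arguments obj {R} r.
Arguments arr {R} r X Y.
Arguments idm {R r} X.
Arguments comp {R r X Y Z}.

Section RCatDefs.
Variables (R : comNzRingType) (C : rcat R).

Definition is_rcategory : Prop :=
  (forall X Y (f : arr C X Y), comp (idm X) f = f /\ comp f (idm Y) = f) /\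
  (forall X Y Z W (f : arr C X Y) (g : arr C Y Z) (h : arr C Z W),
      comp (comp f g) h = comp f (comp g h)) /\
  (forall X Y Z (f : arr C X Y) (g1 g2 : arr C Y Z) (k : R),
      comp f (k *: g1 + g2) = k *: comp f g1 + comp f g2) /\
  (forall X Y Z (f1 f2 : arr C X Y) (g : arr C Y Z) (k : R),
      comp (k *: f1 + f2) g = k *: comp f1 g + comp f2 g).

Definition is_kernel X Y (f : arr C X Y) K (k : arr C K X) : Prop :=
  comp k f = 0 /\
  forall W (g : arr C W X), comp g f = 0 -> exists! u : arr C W K, comp u k = g.

Definition is_cokernel X Y (f : arr C X Y) Q (q : arr C Y Q) : Prop :=
  comp f q = 0 /\
  forall W (g : arr C Y W), comp f g = 0 -> exists! u : arr C Q W, comp q u = g.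

(* arbitrary direct sums (coproducts; in an additive category these are the
   direct sums; the empty one is a zero object, finite ones are biproducts) *)
Definition has_direct_sums : Prop :=
  forall (I : Type) (F : I -> obj C),
    exists (S : obj C) (inj : forall i, arr C (F i) S),
      forall Z (g : forall i, arr C (F i) Z),
        exists! u : arr C S Z, forall i, comp (inj i) u = g i.

Definition preabelian : Prop :=
  is_rcategory /\ has_direct_sums /\
  forall X Y (f : arr C X Y),
    (exists K (k : arr C K X), is_kernel f k) /\
    (exists Q (q : arr C Y Q), is_cokernel f q).

Definition mono X Y (f : arr C X Y) : Prop :=
  forall W (g1 g2 : arr C W X), comp g1 f = comp g2 f -> g1 = g2.

Variables (U : obj C -> Type) (Umap : forall X Y, arr C X Y -> U X -> U Y).
Arguments Umap {X Y}.

Definition concrete : Prop :=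
  (forall X (x : U X), Umap (idm X) x = x) /\
  (forall X Y Z (f : arr C X Y) (g : arr C Y Z) (x : U X),
      Umap (comp f g) x = Umap g (Umap f x)) /\
  (forall X Y (f g : arr C X Y), (forall x, Umap f x = Umap g x) -> f = g).

Definition monos_injective : Prop :=
  forall X Y (f : arr C X Y), mono f -> forall x y, Umap f x = Umap f y -> x = y.

Definition directed (D : Type) (le : D -> D -> Prop) : Prop :=
  inhabited D /\ (forall i, le i i) /\
  (forall i j k, le i j -> le j k -> le i k) /\
  (forall i j, exists k, le i k /\ le j k).

Definition diagram D (le : D -> D -> Prop) (F : D -> obj C)
  (Fm : forall i j, le i j -> arr C (F i) (F j)) : Prop :=
  (forall i (p : le i i), Fm i i p = idm (F i)) /\
  (forall i j k (p : le i j) (q : le j k) (r : le i k),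
      comp (Fm i j p) (Fm j k q) = Fm i k r).

Definition cocone D (le : D -> D -> Prop) (F : D -> obj C)
  (Fm : forall i j, le i j -> arr C (F i) (F j)) L (c : forall i, arr C (F i) L) :=
  forall i j (p : le i j), comp (Fm i j p) (c j) = c i.

Definition is_colimit D (le : D -> D -> Prop) (F : D -> obj C)
  (Fm : forall i j, le i j -> arr C (F i) (F j)) L (c : forall i, arr C (F i) L) :=
  cocone Fm c /\
  forall Z (c' : forall i, arr C (F i) Z), cocone Fm c' ->
    exists! u : arr C L Z, forall i, comp (c i) u = c' i.

Definition preserves_directed_colimits : Prop :=
  forall D (le : D -> D -> Prop) (F : D -> obj C)
    (Fm : forall i j, le i j -> arr C (F i) (F j)) L (c : forall i, arr C (F i) L),
    directed le -> diagram Fm -> is_colimit Fm c ->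
    (forall z : U L, exists i (x : U (F i)), z = Umap (c i) x) /\
    (forall i j (x : U (F i)) (y : U (F j)), Umap (c i) x = Umap (c j) y ->
       exists k (p : le i k) (q : le j k), Umap (Fm i k p) x = Umap (Fm j k q) y).

End RCatDefs.

Record graph := Graph { vert : Type; edge : vert -> vert -> Prop }.

Definition ghom (G H : graph) :=
  {f : vert G -> vert H | forall x y, edge x y -> edge (f x) (f y)}.

Definition gcomp (G H K : graph) (f : ghom G H) (g : ghom H K) : ghom G K.
Proof.
exists (fun x => proj1_sig g (proj1_sig f x)).
by move=> x y e; apply: (proj2_sig g); apply: (proj2_sig f).
Defined.

Definition gid (G : graph) : ghom G G :=
  exist (fun f : vert G -> vert G => forall x y, edge x y -> edge (f x) (f y))
    (fun x => x) (fun x y e => e).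

Definition graph_iso (G H : graph) : Prop :=
  exists f : vert G -> vert H, bijective f /\ forall x y, edge x y <-> edge (f x) (f y).

(* Cardinals: a cardinal kappa is represented by a type K.            *)
Definition card_lt (T K : Type) : Prop :=
  (exists f : T -> K, injective f) /\ ~ (exists g : K -> T, injective g).

Definition uncountable_cofinality (K : Type) : Prop :=
  (exists f : nat -> K, injective f) /\
  forall T : nat -> Type, (forall n, card_lt (T n) K) -> card_lt {n : nat & T n} K.

(* Gamma: one representative per isomorphism class of graphs of size < kappa *)
Definition skeleton (K GI : Type) (gr : GI -> graph) : Prop :=
  (forall i, card_lt (vert (gr i)) K) /\
  (forall i j, graph_iso (gr i) (gr j) -> i = j) /\
  (forall G : graph, card_lt (vert G) K -> exists i, graph_iso G (gr i)).

Definition mor (GI : Type) (gr : GI -> graph) (X Y : GI) := ghom (gr X) (gr Y).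

Definition gmono (GI : Type) (gr : GI -> graph) (X Y : GI) (phi : mor gr X Y) : Prop :=
  forall Z (g1 g2 : mor gr Z X), gcomp g1 phi = gcomp g2 phi -> g1 = g2.

(* basis of A: the morphisms of Gamma, plus 1 (= None) *)
Definition Abasis (GI : Type) (gr : GI -> graph) :=
  option {XY : GI * GI & mor gr XY.1 XY.2}.

Section AlgebraDefs.
Variables (R : comNzRingType) (C : rcat R) (GI : Type) (gr : GI -> graph) (M : obj C).
(* theta s = the endomorphism of M by which the basis element s of A acts *)
Variable theta : forall X Y, mor gr X Y -> arr C M M.

Definition thetaB (b : Abasis gr) : arr C M M :=
  match b with
  | None => idm M
  | Some (existT XY s) => theta s
  end.

Definition lincombB (l : seq (R * Abasis gr)) : arr C M M :=
  foldr (fun p acc => p.1 *: thetaB p.2 + acc) 0 l.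

(* (B1): A ~= Hom_R(M,M) as R-algebras, via the linear extension of theta;
   composition in A (sigma tau = first sigma then tau, 0 if not composable)
   corresponds to composition of endomorphisms (right action) *)
Definition B1 : Prop :=
  (forall X Y Z (s : mor gr X Y) (t : mor gr Y Z),
      comp (theta s) (theta t) = theta (gcomp s t)) /\
  (forall X Y Y' Z (s : mor gr X Y) (t : mor gr Y' Z),
      Y <> Y' -> comp (theta s) (theta t) = 0) /\
  (forall e : arr C M M, exists l : seq (R * Abasis gr), e = lincombB l) /\
  (forall l : seq (R * Abasis gr), List.NoDup (map snd l) -> lincombB l = 0 ->
      forall p, List.In p l -> p.1 = 0).

Variables (U : obj C -> Type) (Umap : forall X Y, arr C X Y -> U X -> U Y).
Arguments Umap {X Y}.

(* (B2): A (identified with End(M) via B1) sits inside M compatibly with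
   the right A-action, and A phi = A cap M phi *)
Definition B2 (j : arr C M M -> U M) : Prop :=
  (forall e f, j e = j f -> e = f) /\
  (forall e f : arr C M M, j (comp e f) = Umap f (j e)) /\
  (forall X Y (phi : mor gr X Y) (m : U M),
     (exists e, m = j (comp e (theta phi))) <->
     ((exists e, m = j e) /\ (exists y, m = Umap (theta phi) y))).

(* (B3): for phi : C -> D mono in Gamma, M id_C >-> M --phi--> M is mono *)
Definition B3 : Prop :=
  forall X Y (phi : mor gr X Y), gmono phi ->
  forall (G : obj C) (i : arr C G M) (p : arr C M G),
    comp i p = idm G -> comp p i = theta (gid (gr X)) ->
    mono (comp i (theta phi)).

Definition lincomb X Y (l : seq (R * mor gr X Y)) : arr C M M :=
  foldr (fun p acc => p.1 *: theta p.2 + acc) 0 l.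

End AlgebraDefs.

(* G X = M id_X, given as a splitting (inclusion i, projection p) of the
   idempotent endomorphism theta(id_X) of M *)
Definition splits (R : comNzRingType) (C : rcat R) (M G : obj C)
  (i : arr C G M) (p : arr C M G) (e : arr C M M) : Prop :=
  comp i p = idm G /\ comp p i = e.

(* Main.v *)
Require Import Defs.
From HB Require Import structures.
From mathcomp Require Import all_boot all_algebra.
From Stdlib Require List Permutation.
From Stdlib Require Import ClassicalEpsilon ProofIrrelevance.
From Stdlib Require Eqdep.
Local Open Scope ring_scope.
Import GRing.Theory.
Set Implicit Arguments.
Unset Strict Implicit.
Local Notation comp := Defs.comp.

Definition dec {T : Type} (x y : T) : {x = y} + {x <> y} :=
  excluded_middle_informative (x = y).

Section Lists.
Variables (R : comNzRingType) (T : Type).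

Definition lc (V : lmodType R) (f : T -> V) (l : seq (R * T)) : V :=
  foldr (fun p acc => p.1 *: f p.2 + acc) 0 l.

Definition coef (l : seq (R * T)) (t : T) : R :=
  foldr (fun p acc => (if dec p.2 t then p.1 else 0) + acc) 0 l.

Fixpoint ins (p : R * T) (l : seq (R * T)) : seq (R * T) :=
  match l with
  | [::] => [:: p]
  | q :: r => if dec q.2 p.2 then (p.1 + q.1, q.2) :: r else q :: ins p r
  end.

Lemma lc_ins (V : lmodType R) (f : T -> V) p l : lc f (ins p l) = p.1 *: f p.2 + lc f l.
Proof.
elim: l => [|q r IH] /=; first by [].
case: (dec q.2 p.2) => [e|ne] /=.
  by rewrite e scalerDl addrA.
by rewrite IH addrCA.
Qed.

Lemma coef_ins p l t :
  coef (ins p l) t = (if dec p.2 t then p.1 else 0) + coef l t.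
Proof.
elim: l => [|q r IH] /=; first by [].
case: (dec q.2 p.2) => [e|ne] /=.
  rewrite -e; case: (dec q.2 t) => ?; by rewrite ?addr0 ?add0r ?addrA.
by rewrite IH addrCA.
Qed.

Lemma In_ins p l t : List.In t (map snd (ins p l)) -> t = p.2 \/ List.In t (map snd l).
Proof.
elim: l => [|q r IH] /=; first by case=> [<-|[]]; left.
case: (dec q.2 p.2) => [e|ne] /=; first by case=> ?; right; [left|right].
case=> [<-|H]; first by right; left.
by case: (IH H) => [?|?]; [left|right; right].
Qed.

Lemma NoDup_ins p l : List.NoDup (map snd l) -> List.NoDup (map snd (ins p l)).
Proof.
elim: l => [|q r IH] /=.
  by move=> _; constructor; [case|constructor].
move=> H; inversion H; subst.
case: (dec q.2 p.2) => [e|ne] /=; first by [].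
constructor; last by apply: IH.
by move/In_ins => [E|]; [apply: ne|].
Qed.

Definition norm (l : seq (R * T)) := foldr ins [::] l.

Lemma lc_norm (V : lmodType R) (f : T -> V) l : lc f (norm l) = lc f l.
Proof. by elim: l => [|p r IH] //=; rewrite lc_ins IH. Qed.

Lemma coef_norm l t : coef (norm l) t = coef l t.
Proof. by elim: l => [|p r IH] //=; rewrite coef_ins IH. Qed.

Lemma NoDup_norm l : List.NoDup (map snd (norm l)).
Proof. elim: l => [|p r IH] /=; [constructor | exact: NoDup_ins]. Qed.

Definition nz (l : seq (R * T)) := filter (fun p => p.1 != 0) l.

Lemma lc_nz (V : lmodType R) (f : T -> V) l : lc f (nz l) = lc f l.
Proof.
elim: l => [|p r IH] //=; case: ifP => [_|/negbFE/eqP ->] /=; rewrite IH //.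
by rewrite scale0r add0r.
Qed.

Lemma In_nz l t : List.In t (map snd (nz l)) -> List.In t (map snd l).
Proof.
elim: l => [|p r IH] //=; case: ifP => _ /=; last by move/IH; right.
by case=> [->|/IH]; [left|right].
Qed.

Lemma NoDup_nz l : List.NoDup (map snd l) -> List.NoDup (map snd (nz l)).
Proof.
elim: l => [|p r IH] /=; first by [].
move=> H; inversion H; subst.
case: ifP => _ /=; last by apply: IH.
by constructor; [move/In_nz|apply: IH].
Qed.

Lemma nz_nonzero l q : List.In q (nz l) -> q.1 != 0.
Proof.
elim: l => [|p r IH] //=; case: ifP => Hp /=; last exact: IH.
by case=> [<-|/IH].
Qed.

Lemma In_map_snd (l : seq (R * T)) (t : T) : List.In t (map snd l) -> exists k, List.In (k, t) l.
Proof.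
elim: l => [|[k s] r IH] //=.
case=> [->|/IH [k' H]]; [by exists k; left | by exists k'; right].
Qed.

Lemma In_map_snd' (l : seq (R * T)) (k : R) (t : T) : List.In (k, t) l -> List.In t (map snd l).
Proof.
elim: l => [|[k' s] r IH] //=.
by case=> [[_ ->]|/IH]; [left|right].
Qed.

Lemma coef_notin l t : ~ List.In t (map snd l) -> coef l t = 0.
Proof.
elim: l => [|[k s] r IH] //= H.
case: (dec s t) => [e|ne]; first by exfalso; apply: H; left.
by rewrite add0r IH // => ?; apply: H; right.
Qed.

Lemma coef_in (l : seq (R * T)) (k : R) (t : T) : List.NoDup (map snd l) -> List.In (k, t) l -> coef l t = k.
Proof.
elim: l => [|[k' s] r IH] //= H; inversion H; subst.
case=> [[<- <-]|Hin].
  case: (dec s s) => // ?; by rewrite coef_notin ?addr0.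
case: (dec s t) => [e|ne]; first by subst; exfalso; apply: H2; apply: In_map_snd' Hin.
by rewrite add0r IH.
Qed.

Lemma coef_zero l t : (forall p, List.In p l -> p.1 = 0) -> coef l t = 0.
Proof.
elim: l => [|p r IH] //= H.
rewrite IH; last by move=> q Hq; apply: H; right.
by rewrite (H p (or_introl erefl)); case: (dec _ _) => ?; rewrite addr0.
Qed.

Lemma coef_cat l1 l2 t : coef (l1 ++ l2) t = coef l1 t + coef l2 t.
Proof. by elim: l1 => [|p r IH] /=; rewrite ?add0r // IH addrA. Qed.

Lemma lc_cat (V : lmodType R) (f : T -> V) l1 l2 : lc f (l1 ++ l2) = lc f l1 + lc f l2.
Proof. by elim: l1 => [|p r IH] /=; rewrite ?add0r // IH addrA. Qed.

Lemma same_coef_in (l l' : seq (R * T)) (p : R * T) :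
  List.NoDup (map snd l) -> List.NoDup (map snd l') ->
  (forall q, List.In q l -> q.1 != 0) ->
  (forall t, coef l t = coef l' t) -> List.In p l -> List.In p l'.
Proof.
move=> N N' nzl E; case: p => k t Hin.
have c1 := coef_in N Hin.
have k0 := nzl _ Hin.
have Hin' : List.In t (map snd l').
  apply: NNPP => Hn; move: (coef_notin Hn); rewrite -E c1 => kz.
  by rewrite kz eqxx in k0.
case: (In_map_snd Hin') => k' H'.
by have := coef_in N' H'; rewrite -E c1 => ->.
Qed.

End Lists.

Section Maps.
Variables (R : comNzRingType) (T T' : Type) (g : T -> T').

Lemma lc_map (V : lmodType R) (f : T' -> V) l :
  lc f (map (fun p : R * T => (p.1, g p.2)) l) = lc (fun t => f (g t)) l.
Proof. by elim: l => [|p r IH] //=; rewrite IH. Qed.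

Lemma lc_mapN (V : lmodType R) (f : T' -> V) l :
  lc f (map (fun p : R * T => (- p.1, g p.2)) l) = - lc (fun t => f (g t)) l.
Proof. by elim: l => [|p r IH] /=; rewrite ?oppr0 // IH opprD scaleNr. Qed.

Hypothesis ginj : injective g.

Lemma coef_map l s : coef (map (fun p : R * T => (p.1, g p.2)) l) (g s) = coef l s.
Proof.
elim: l => [|p r IH] //=; rewrite IH.
case: (dec (g p.2) (g s)) => [e|ne]; case: (dec p.2 s) => [e'|ne'] //.
- by case: ne'; apply: ginj.
- by case: ne; rewrite e'.
Qed.

Lemma coef_mapN l s : coef (map (fun p : R * T => (- p.1, g p.2)) l) (g s) = - coef l s.
Proof.
elim: l => [|p r IH] /=; rewrite ?oppr0 // IH opprD.
case: (dec (g p.2) (g s)) => [e|ne]; case: (dec p.2 s) => [e'|ne'] //; rewrite ?oppr0 //.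
- by case: ne'; apply: ginj.
- by case: ne; rewrite e'.
Qed.
End Maps.

Section Cat.
Variables (R : comNzRingType) (C : rcat R) (H : is_rcategory C).

Lemma comp0r X Y Z (f : arr C X Y) : comp f (0 : arr C Y Z) = 0.
Proof.
have E := (proj1 (proj2 (proj2 H))) X Y Z f 0 0 1.
rewrite !scale1r addr0 in E.
have : comp f 0 + comp f 0 = comp f (0 : arr C Y Z) + 0 by rewrite addr0 -E.
by move/addrI.
Qed.

Lemma comp0l X Y Z (f : arr C Y Z) : comp (0 : arr C X Y) f = 0.
Proof.
have E := (proj2 (proj2 (proj2 H))) X Y Z 0 0 f 1.
rewrite !scale1r addr0 in E.
have : comp 0 f + comp 0 f = comp (0 : arr C X Y) f + 0 by rewrite addr0 -E.
by move/addrI.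
Qed.

Lemma comp_lc_r X Y Z (f : arr C X Y) T (g : T -> arr C Y Z) l :
  comp f (lc g l) = lc (fun t => comp f (g t)) l.
Proof.
elim: l => [|p r IH] /=; first exact: comp0r.
by rewrite (proj1 (proj2 (proj2 H))) IH.
Qed.

Lemma comp_lc_l X Y Z (f : arr C Y Z) T (g : T -> arr C X Y) l :
  comp (lc g l) f = lc (fun t => comp (g t) f) l.
Proof.
elim: l => [|p r IH] /=; first exact: comp0l.
by rewrite (proj2 (proj2 (proj2 H))) IH.
Qed.
End Cat.

Lemma gcomp_gid (G H : graph) (s : ghom G H) : gcomp (gid G) s = s.
Proof.
case: s => f pf; rewrite /gcomp /=; congr (exist _ _ _); exact: proof_irrelevance.
Qed.

Theorem lemma3p8
  (R : comNzRingType) (K : Type) (C : rcat R)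
  (U : obj C -> Type) (Umap : forall X Y, arr C X Y -> U X -> U Y)
  (GI : Type) (gr : GI -> graph) (M : obj C)
  (theta : forall X Y, mor gr X Y -> arr C M M) (j : arr C M M -> U M) :
  preabelian C -> concrete Umap -> monos_injective Umap ->
  preserves_directed_colimits Umap ->
  uncountable_cofinality K -> skeleton K gr ->
  B1 theta -> B2 theta Umap j -> B3 theta ->
  forall (X Y : GI) (GX GY : obj C)
    (iX : arr C GX M) (pX : arr C M GX) (iY : arr C GY M) (pY : arr C M GY),
    splits iX pX (theta X X (gid (gr X))) -> splits iY pY (theta Y Y (gid (gr Y))) ->
  forall h : arr C GX GY,
  exists l : seq (R * mor gr X Y),
    [/\ List.NoDup (map snd l),
        (forall q, List.In q l -> q.1 != 0),
        (forall x : U GX, Umap _ _ iY (Umap _ _ h x) = Umap _ _ (lincomb theta l) (Umap _ _ iX x)) &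
        (forall l' : seq (R * mor gr X Y),
           List.NoDup (map snd l') -> (forall q, List.In q l' -> q.1 != 0) ->
           (forall x : U GX, Umap _ _ iY (Umap _ _ h x) = Umap _ _ (lincomb theta l') (Umap _ _ iX x)) ->
           Permutation.Permutation l l')].
Proof.
move=> [Hcat _] [Uid [Ucomp Ufaith]] _ _ _ _ [B1a [B1b [B1c B1d]]] _ _
  X Y GX GY iX pX iY pY [sX1 sX2] [sY1 sY2] h.
have idl := fun X Y f => proj1 ((proj1 Hcat) X Y f).
have idr := fun X Y f => proj2 ((proj1 Hcat) X Y f).
have assoc := proj1 (proj2 Hcat).
set thX := theta X X (gid (gr X)).
set thY := theta Y Y (gid (gr Y)).
have key : forall b : Abasis gr,
    (exists s : mor gr X Y, comp thX (comp (thetaB theta b) thY) = theta X Y s) \/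
    comp thX (comp (thetaB theta b) thY) = 0.
  case=> [[[A B] s]|] /=.
    case: (classic (B = Y)) => [eB|nB]; last first.
      by right; rewrite (B1b _ _ _ _ s (gid (gr Y)) nB) comp0r.
    subst B; rewrite B1a.
    case: (classic (X = A)) => [eA|nA]; last first.
      by right; rewrite (B1b _ _ _ _ (gid (gr X)) _ nA).
    subst A; left; exists (gcomp (gid (gr X)) (gcomp s (gid (gr Y)))).
    by rewrite B1a.
  rewrite idl; case: (classic (X = Y)) => [eXY|nXY]; last first.
    by right; rewrite /thX /thY (B1b _ _ _ _ _ _ nXY).
  subst Y; left; exists (gcomp (gid (gr X)) (gid (gr X))); by rewrite B1a.
have build : forall lB : seq (R * Abasis gr), exists l0 : seq (R * mor gr X Y),
    lc (fun b => comp thX (comp (thetaB theta b) thY)) lB = lc (@theta X Y) l0.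
  elim=> [|[k b] r [l0 IH]]; first by exists [::].
  case: (key b) => [[s Hs]|H0].
    by exists ((k, s) :: l0); rewrite /= Hs IH.
  by exists l0; rewrite /= H0 scaler0 add0r IH.
set e := comp pX (comp h iY).
have eR : comp e thY = e.
  by rewrite /e /thY -sY2 !assoc -(assoc _ _ _ _ iY pY iY) sY1 idl.
have eL : comp thX e = e.
  by rewrite /e /thX -sX2 assoc -(assoc _ _ _ _ iX pX) sX1 idl.
have [lB0 HlB0] := B1c e.
have [l0 Hl0] := build lB0.
have He : e = lc (@theta X Y) l0.
  rewrite -Hl0 -{1}eL -eR HlB0 /lincombB.
  rewrite -/(lc (thetaB theta) lB0) (comp_lc_l Hcat) (comp_lc_r Hcat) //.
have F : forall x, Umap _ _ (comp iX e) x = Umap _ _ iY (Umap _ _ h x).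
  by move=> x; rewrite /e -assoc sX1 idl Ucomp.
have idX_lc : forall l' : seq (R * mor gr X Y), comp thX (lc (@theta X Y) l') = lc (@theta X Y) l'.
  move=> l'; rewrite (comp_lc_r Hcat); elim: l' => [|p r IH] //=.
  by rewrite IH /thX B1a gcomp_gid.
exists (nz (norm l0)); split.
- exact/NoDup_nz/NoDup_norm.
- exact: nz_nonzero.
- move=> x; rewrite -F -Ucomp; congr (Umap _ _ _ x); congr (comp iX _).
  by rewrite He /lincomb -/(lc (@theta X Y) _) lc_nz lc_norm.
move=> l' N' nz' Hl'.
have El : lincomb theta (nz (norm l0)) = e
  by rewrite He /lincomb -/(lc (@theta X Y) _) lc_nz lc_norm.
have E1 : comp iX (lincomb theta l') = comp iX e.
  by apply: Ufaith => x; rewrite F Hl' Ucomp.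
have E2 : lincomb theta l' = e.
  have := f_equal (comp pX) E1; rewrite -!(assoc _ _ _ _ pX iX) sX2 -/thX eL.
  by rewrite /lincomb -/(lc (@theta X Y) _) idX_lc.
set emb := fun s : mor gr X Y =>
  Some (existT (fun XY : GI * GI => mor gr XY.1 XY.2) (X, Y) s) : Abasis gr.
have embI : injective emb.
  move=> s t E; have E' := f_equal (fun o : Abasis gr => match o with Some v => v | None => existT (fun XY : GI * GI => mor gr XY.1 XY.2) (X, Y) s end) E.
  exact: (Eqdep.EqdepTheory.inj_pair2 _ _ _ _ _ E').
set l := nz (norm l0).
set lB := map (fun p : R * mor gr X Y => (p.1, emb p.2)) l ++
          map (fun p : R * mor gr X Y => (- p.1, emb p.2)) l'.
have lB0' : lc (thetaB theta) (norm lB) = 0.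
  rewrite lc_norm lc_cat lc_map lc_mapN.
  have -> : lc (fun t => thetaB theta (emb t)) l = lincomb theta l by [].
  have -> : lc (fun t => thetaB theta (emb t)) l' = lincomb theta l' by [].
  by rewrite El E2 subrr.
have Z := B1d _ (NoDup_norm lB) lB0'.
have Ecoef : forall s, coef l s = coef l' s.
  move=> s; have := coef_zero (emb s) Z.
  rewrite coef_norm coef_cat coef_map // coef_mapN // => /eqP.
  by rewrite subr_eq0 => /eqP.
have Nl : List.NoDup (map snd l) by exact/NoDup_nz/NoDup_norm.
have nzl : forall q, List.In q l -> q.1 != 0 by exact: nz_nonzero.
apply: Permutation.NoDup_Permutation.
- by apply: (List.NoDup_map_inv snd); elim: (l) Nl => //= ? ? ->.
- by apply: (List.NoDup_map_inv snd); elim: (l') N' => //= ? ? ->.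
- move=> p; split; first exact: same_coef_in.
  by apply: same_coef_in => // t; rewrite Ecoef.
Qed.
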